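(* Let $i_1$ be the largest index $i\in[1,n]$ with $d_P(v_1,v_i)<d_P(v_i,v_n)$ and let $i_2$ be the smallest index $i\in[1,n]$ with $d_P(v_1,v_i)\ge|v_iv_n|$, and suppose $i_2\le i_1$. For each $i\in[i_2,i_1]$ let $j(i)$ be the smallest index $j\in[i,n]$ with $d_P(v_1,v_i)\ge |v_iv_j|+d_P(v_j,v_n)$ (this exists), and let $k(i)$ be the largest index $k\in[i,j(i)]$ with $d_P(v_1,v_i)<|v_iv_{j(i)}|+d_P(v_{j(i)},v_k)$, with $k(i)=0$ if no such $k$ exists. Then for every $i\in[i_2,i_1-1]$, $j(i+1)\le j(i)$ and $k(i+1)\le k(i)$.
   Context: Let $v_1,\dots,v_n$ be points of a metric space with metric $|\cdot|$ (symmetric, nonnegative, $|v_iv_j|=0$ iff $i=j$, triangle inequality). For $i\le j$ let $d_P(v_i,v_j)=\sum_{k=i}^{j-1}|v_kv_{k+1}|$ and $d_P(v_j,v_i)=d_P(v_i,v_j)$. *)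

(* Defs.v *)
From Stdlib Require Import Reals Lra Lia Arith.
Open Scope R_scope.

Fixpoint seg (f : nat -> R) (i m : nat) : R :=
  match m with
  | O => 0
  | S m' => f i + seg f (S i) m'
  end.

Definition is_metric {X : Type} (dist : X -> X -> R) : Prop :=
  (forall x y, 0 <= dist x y) /\
  (forall x y, dist x y = dist y x) /\
  (forall x y, dist x y = 0 <-> x = y) /\
  (forall x y z, dist x z <= dist x y + dist y z).

Definition dP {X : Type} (dist : X -> X -> R) (v : nat -> X) (i j : nat) : R :=
  if (i <=? j)%nat
  then seg (fun k => dist (v k) (v (S k))) i (j - i)
  else seg (fun k => dist (v k) (v (S k))) j (i - j).

Definition Jprop {X : Type} (dist : X -> X -> R) (v : nat -> X) (n i j : nat) : Prop :=
  dP dist v 1 i >= dist (v i) (v j) + dP dist v j n.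

Definition IsJ {X : Type} (dist : X -> X -> R) (v : nat -> X) (n i j : nat) : Prop :=
  (i <= j <= n)%nat /\ Jprop dist v n i j /\
  (forall j', (i <= j' <= n)%nat -> Jprop dist v n i j' -> (j <= j')%nat).

Definition Kprop {X : Type} (dist : X -> X -> R) (v : nat -> X) (i j k : nat) : Prop :=
  dP dist v 1 i < dist (v i) (v j) + dP dist v j k.

Definition IsK {X : Type} (dist : X -> X -> R) (v : nat -> X) (i j k : nat) : Prop :=
  ((i <= k <= j)%nat /\ Kprop dist v i j k /\
   (forall k', (i <= k' <= j)%nat -> Kprop dist v i j k' -> (k' <= k)%nat))
  \/
  (k = 0%nat /\ (forall k', (i <= k' <= j)%nat -> ~ Kprop dist v i j k')).

(* Main.v *)
Require Import Defs.
From Stdlib Require Import Reals Lra Lia Arith Classical.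
Open Scope R_scope.

Lemma seg_split f i a b : seg f i (a+b) = seg f i a + seg f (i+a) b.
Proof.
  revert i; induction a as [|a IH]; intros i; simpl.
  - rewrite Nat.add_0_r; lra.
  - rewrite IH. replace (i + S a)%nat with (S i + a)%nat by lia. lra.
Qed.

Lemma dP_le {X} (dist : X -> X -> R) v a b : (a <= b)%nat ->
  dP dist v a b = seg (fun k => dist (v k) (v (S k))) 0 b - seg (fun k => dist (v k) (v (S k))) 0 a.
Proof.
  intros H. unfold dP. destruct (Nat.leb_spec a b); [|lia].
  pose proof (seg_split (fun k => dist (v k) (v (S k))) 0 a (b - a)) as E.
  simpl in E. replace (a + (b - a))%nat with b in E by lia. lra.
Qed.

Lemma dP_ge {X} (dist : X -> X -> R) v a b : (b <= a)%nat ->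
  dP dist v a b = seg (fun k => dist (v k) (v (S k))) 0 a - seg (fun k => dist (v k) (v (S k))) 0 b.
Proof.
  intros H. unfold dP. destruct (Nat.leb_spec a b).
  - assert (a = b) by lia; subst. replace (b - b)%nat with 0%nat by lia. simpl. lra.
  - pose proof (seg_split (fun k => dist (v k) (v (S k))) 0 b (a - b)) as E.
    simpl in E. replace (b + (a - b))%nat with a in E by lia. lra.
Qed.

Lemma Sm_S f m : seg f 0 (S m) = seg f 0 m + f m.
Proof.
  pose proof (seg_split f 0 m 1) as E. simpl in E.
  replace (m + 1)%nat with (S m) in E by lia. lra.
Qed.

Lemma Sm_mono {X} (dist : X -> X -> R) v (Hm : is_metric dist) a b : (a <= b)%nat ->
  seg (fun k => dist (v k) (v (S k))) 0 a <= seg (fun k => dist (v k) (v (S k))) 0 b.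
Proof.
  intros H; induction H. lra. rewrite Sm_S. destruct Hm as [H0 _].
  specialize (H0 (v m) (v (S m))). lra.
Qed.

Lemma path_tri {X} (dist : X -> X -> R) v (Hm : is_metric dist) a b : (a <= b)%nat ->
  dist (v a) (v b) <= seg (fun k => dist (v k) (v (S k))) 0 b - seg (fun k => dist (v k) (v (S k))) 0 a.
Proof.
  intros H; induction H.
  - destruct Hm as [_ [_ [H3 _]]]. rewrite (proj2 (H3 (v a) (v a)) eq_refl). lra.
  - rewrite Sm_S. destruct Hm as [_ [_ [_ H4]]].
    specialize (H4 (v a) (v m) (v (S m))). lra.
Qed.

Lemma min_exists (P : nat -> Prop) N : P N -> exists m, P m /\ forall m', P m' -> (m <= m')%nat.
Proof.
  intros HN.
  assert (G : forall N, (exists m, (m <= N)%nat /\ P m) -> exists m, P m /\ forall m', P m' -> (m <= m')%nat).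
  { clear N HN. induction N as [|N IH]; intros [m [Hm Pm]].
    - exists m; split; auto. intros; lia.
    - destruct (classic (exists m, (m <= N)%nat /\ P m)) as [E|E]; auto.
      exists m; split; auto. intros m' Pm'. destruct (Nat.le_gt_cases m' N) as [L|L].
      + exfalso; apply E; eauto.
      + lia. }
  apply (G N). exists N; split; auto.
Qed.

Theorem lemma10 (X : Type) (dist : X -> X -> R) (n : nat) (v : nat -> X)
  (Hmetric : is_metric dist)
  (Hdistinct : forall i j, (1 <= i <= n)%nat -> (1 <= j <= n)%nat ->
                 (dist (v i) (v j) = 0 <-> i = j))
  (i1 i2 : nat)
  (Hi1 : (1 <= i1 <= n)%nat /\ dP dist v 1 i1 < dP dist v i1 n /\
         (forall i, (1 <= i <= n)%nat -> dP dist v 1 i < dP dist v i n -> (i <= i1)%nat))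
  (Hi2 : (1 <= i2 <= n)%nat /\ dP dist v 1 i2 >= dist (v i2) (v n) /\
         (forall i, (1 <= i <= n)%nat -> dP dist v 1 i >= dist (v i) (v n) -> (i2 <= i)%nat))
  (H21 : (i2 <= i1)%nat) :
  (forall i, (i2 <= i <= i1)%nat -> exists j, IsJ dist v n i j) /\
  (forall i, (i2 <= i <= i1 - 1)%nat ->
     forall j1 j2 k1 k2,
       IsJ dist v n i j1 -> IsJ dist v n (S i) j2 ->
       IsK dist v i j1 k1 -> IsK dist v (S i) j2 k2 ->
       (j2 <= j1)%nat /\ (k2 <= k1)%nat).
Proof.
  destruct Hi1 as [Hi1r [Hi1p _]]. destruct Hi2 as [Hi2r [Hi2p _]].
  set (Sm := seg (fun k => dist (v k) (v (S k))) 0) in *.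
  pose proof Hmetric as [Hnn [Hsym [Hz Htri]]].
  assert (Hself : forall x, dist x x = 0) by (intro x; apply (proj2 (Hz x x)); auto).
  split.
  - intros i Hi.
    destruct (min_exists (fun j => (i <= j <= n)%nat /\ Jprop dist v n i j) n) as [j [[Hj1 Hj2] Hj3]].
    + (split; [lia|]); unfold Jprop.
      rewrite (dP_le dist v 1 i) by lia. rewrite (dP_le dist v n n) by lia.
      rewrite (dP_le dist v 1 i2) in Hi2p by lia. fold Sm in Hi2p |- *.
      pose proof (Htri (v i) (v i2) (v n)).
      pose proof (path_tri dist v Hmetric i2 i ltac:(lia)). fold Sm in H0.
      rewrite (Hsym (v i) (v i2)) in H. lra.
    + exists j. split; [lia|]. split; [exact Hj2|]. intros j' Hj' Pj'. apply Hj3. auto.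
  - intros i Hi j1 j2 k1 k2 [Hj1r [Hj1p _]] [Hj2r [_ Hj2m]] HK1 HK2.
    assert (Hj1i : j1 <> i).
    { intro E; subst j1. unfold Jprop in Hj1p.
      rewrite (dP_le dist v 1 i) in Hj1p by lia. rewrite (dP_le dist v i n) in Hj1p by lia.
      rewrite (dP_le dist v 1 i1) in Hi1p by lia. rewrite (dP_le dist v i1 n) in Hi1p by lia.
      fold Sm in Hj1p, Hi1p. rewrite Hself in Hj1p.
      pose proof (Sm_mono dist v Hmetric i i1 ltac:(lia)). fold Sm in H. lra. }
    assert (HSi : Sm (S i) = Sm i + dist (v i) (v (S i))) by (unfold Sm; apply Sm_S).
    assert (Hj : (j2 <= j1)%nat).
    { apply Hj2m; [lia|]. unfold Jprop in *.
      rewrite (dP_le dist v 1 i) in Hj1p by lia. rewrite (dP_le dist v 1 (S i)) by lia.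
      fold Sm in Hj1p |- *.
      pose proof (Htri (v (S i)) (v i) (v j1)). rewrite (Hsym (v (S i)) (v i)) in H. lra. }
    split; auto.
    destruct HK2 as [[Hk2r [Hk2p _]] | [-> _]]; [|lia].
    assert (Kp : Kprop dist v i j1 k2).
    { unfold Kprop in *.
      rewrite (dP_le dist v 1 i) by lia. rewrite (dP_le dist v 1 (S i)) in Hk2p by lia.
      rewrite (dP_ge dist v j2 k2) in Hk2p by lia. rewrite (dP_ge dist v j1 k2) by lia.
      fold Sm in Hk2p |- *.
      pose proof (Htri (v (S i)) (v i) (v j2)). rewrite (Hsym (v (S i)) (v i)) in H.
      pose proof (Htri (v i) (v j1) (v j2)). rewrite (Hsym (v j1) (v j2)) in H0.
      pose proof (path_tri dist v Hmetric j2 j1 Hj). fold Sm in H1. lra. }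
    destruct HK1 as [[_ [_ Hm]] | [_ Hn]].
    + apply Hm; auto; lia.
    + exfalso. apply (Hn k2); auto; lia.
Qed.
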